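(* A square complex matrix $A$ is diagonalizable by *congruence (i.e. $R^*AR$ is diagonal for some nonsingular $R$) if and only if both of the following hold: (a) $A$ and $A^*$ have the same null space; (b) the *cosquare $B^{-*}B$ of the regular part $B$ of $A$ is diagonalizable and all its eigenvalues have modulus one.
   Context: The *cosquare of a nonsingular matrix $B$ is $B^{-*}B$, where $B^{-*}=(B^{-1})^*$. Every square complex matrix $A$ is *congruent to a direct sum $B\oplus J_{r_1}(0)\oplus\cdots\oplus J_{r_p}(0)$ with $B$ nonsingular and $J_r(0)$ the $r\times r$ nilpotent Jordan block; this direct sum is uniquely determined up to permutation of the singular summands and replacement of $B$ by a matrix *congruent to it. Such a $B$ is called the regular part of $A$ (its *congruence class, hence the similarity class of its *cosquare, is uniquely determined by $A$). *)

(* Defs.v *)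
From mathcomp Require Import all_boot all_algebra.
From mathcomp Require Import reals complex.
Set Implicit Arguments. Unset Strict Implicit. Unset Printing Implicit Defensive.
Import GRing.Theory Num.Theory.
Local Open Scope ring_scope.

Section Defs.
Variable C : numClosedFieldType.

Definition ctmx m n (A : 'M[C]_(m, n)) : 'M[C]_(n, m) := (map_mx Num.conj A)^T.

Definition cosquare k (B : 'M[C]_k) : 'M[C]_k := ctmx (invmx B) *m B.

Definition nil_jordan (r : nat) : 'M[C]_r := \matrix_(i < r, j < r) (i.+1 == j)%:R.

Fixpoint jordan_nil_sum (s : seq nat) : 'M[C]_(sumn s) :=
  match s return 'M[C]_(sumn s) with
  | [::] => 0
  | r :: s' => block_mx (nil_jordan r) 0 0 (jordan_nil_sum s')
  end.

Definition regular_part n k (A : 'M[C]_n) (B : 'M[C]_k) : Prop :=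
  B \in unitmx /\
  exists (s : seq nat) (e : k + sumn s = n) (R : 'M[C]_n),
    R \in unitmx /\
    ctmx R *m A *m R = castmx (e, e) (block_mx B 0 0 (jordan_nil_sum s)).

End Defs.

(* Main.v *)
Require Import Defs.
From mathcomp Require Import all_boot all_algebra.
From mathcomp Require Import reals complex.
From mathcomp Require Import zify.
Set Implicit Arguments. Unset Strict Implicit. Unset Printing Implicit Defensive.
Import GRing.Theory Num.Theory.
Local Open Scope ring_scope.


Section CT.
Variable C : numClosedFieldType.

Lemma ctmxK m n (A : 'M[C]_(m, n)) : ctmx (ctmx A) = A.
Proof. by apply/matrixP => i j; rewrite !mxE conjCK. Qed.

Lemma ctmxM m n p (A : 'M[C]_(m, n)) (B : 'M[C]_(n, p)) :
  ctmx (A *m B) = ctmx B *m ctmx A.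
Proof. by rewrite /ctmx map_mxM trmx_mul. Qed.

Lemma ctmx0 m n : ctmx (0 : 'M[C]_(m, n)) = 0.
Proof. by apply/matrixP => i j; rewrite !mxE conjC0. Qed.

Lemma ctmx1 n : ctmx (1%:M : 'M[C]_n) = 1%:M.
Proof. by rewrite /ctmx map_mx1 trmx1. Qed.

Lemma ctmx_unit n (A : 'M[C]_n) : (ctmx A \in unitmx) = (A \in unitmx).
Proof. by rewrite /ctmx unitmx_tr map_unitmx. Qed.

Lemma ctmx_inv n (A : 'M[C]_n) : ctmx (invmx A) = invmx (ctmx A).
Proof. by rewrite /ctmx map_invmx trmx_inv. Qed.

Lemma ctmx_block m1 m2 n1 n2 (a : 'M[C]_(m1, n1)) (b : 'M[C]_(m1, n2))
   (c : 'M[C]_(m2, n1)) (d : 'M[C]_(m2, n2)) :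
  ctmx (block_mx a b c d) = block_mx (ctmx a) (ctmx c) (ctmx b) (ctmx d).
Proof. by rewrite /ctmx map_block_mx tr_block_mx. Qed.

Lemma ctmx_row m n1 n2 (a : 'M[C]_(m, n1)) (b : 'M[C]_(m, n2)) :
  ctmx (row_mx a b) = col_mx (ctmx a) (ctmx b).
Proof. by rewrite /ctmx map_row_mx tr_row_mx. Qed.

Lemma ctmx_diag n (d : 'rV[C]_n) : ctmx (diag_mx d) = diag_mx (map_mx Num.conj d).
Proof. by rewrite /ctmx map_diag_mx tr_diag_mx. Qed.

Local Open Scope sesquilinear_scope.
Lemma ctmx_t n (A : 'M[C]_n) : ctmx A = A ^t*.
Proof. by rewrite /ctmx map_trmx. Qed.

End CT.

Section CT2.
Variable C : numClosedFieldType.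
Lemma ctmxD m n (A B : 'M[C]_(m, n)) : ctmx (A + B) = ctmx A + ctmx B.
Proof. by apply/matrixP => i j; rewrite !mxE rmorphD. Qed.
Lemma ctmxN m n (A : 'M[C]_(m, n)) : ctmx (- A) = - ctmx A.
Proof. by apply/matrixP => i j; rewrite !mxE rmorphN. Qed.
Lemma ctmxZ m n a (A : 'M[C]_(m, n)) : ctmx (a *: A) = a^* *: ctmx A.
Proof. by apply/matrixP => i j; rewrite !mxE rmorphM. Qed.
Lemma ctmx_col m1 m2 n (a : 'M[C]_(m1, n)) (b : 'M[C]_(m2, n)) :
  ctmx (col_mx a b) = row_mx (ctmx a) (ctmx b).
Proof. by rewrite /ctmx map_col_mx tr_col_mx. Qed.
End CT2.



Section L1.
Variable C : numClosedFieldType.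

Lemma row_diag_mul n m (d : 'rV[C]_n) (P : 'M[C]_(n, m)) i :
  row i (diag_mx d *m P) = d 0 i *: row i P.
Proof. by rewrite row_mul row_diag_mx -scalemxAl -rowE. Qed.

Lemma row_unit_neq0 n (P : 'M[C]_n) i : P \in unitmx -> row i P != 0.
Proof.
move=> Pu; apply/eqP => h.
have : delta_mx 0 i *m P *m invmx P = delta_mx 0 i :> 'rV[C]_n by rewrite mulmxK.
rewrite -rowE h mul0mx => /matrixP /(_ 0 i); rewrite !mxE !eqxx /= => /eqP.
by rewrite eq_sym oner_eq0.
Qed.

Lemma L1 k (B : 'M[C]_k) : B \in unitmx -> diagonalizable (cosquare B) ->
  (forall l, eigenvalue (cosquare B) l -> `|l| = 1) ->
  exists V, V \in unitmx /\ is_diag_mx (ctmx V *m B *m V).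
Proof.
move=> Bu [P Pu /diagonalizable_forPex [D /(simmxRL Pu) HL]] Heig.
set Cq := cosquare B in HL Heig.
set L := diag_mx D in HL.
have PC : P *m Cq = L *m P by rewrite HL mulmxKV.
have HD i : `|D 0 i| = 1.
  apply: Heig; apply/eigenvalueP; exists (row i P); last exact: row_unit_neq0.
  by rewrite -row_mul PC row_diag_mul.
have LL : L *m ctmx L = 1%:M.
  rewrite /L ctmx_diag mul_diag_mx; apply/matrixP => i j; rewrite !mxE.
  case: (eqVneq i j) => [->|nij]; last by rewrite !mulr0n mulr0.
  by rewrite !mulr1n -normCK HD expr1n.
set Y := ctmx (invmx P) *m B *m invmx P.
have cY : ctmx Y = ctmx (invmx P) *m ctmx B *m invmx P.
  by rewrite /Y !ctmxM ctmxK mulmxA.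
have HY : Y = ctmx Y *m L.
  rewrite cY HL !mulmxA mulmxKV // /Cq /cosquare.
  rewrite -[ctmx (invmx P) *m ctmx B *m ctmx (invmx B)]mulmxA -ctmxM.
  by rewrite mulVmx // ctmx1 mulmx1 /Y.
have cY2 : ctmx Y = ctmx L *m Y.
  by rewrite {1}HY ctmxM ctmxK.
have Ynorm : Y \is normalmx.
  apply/normalmxP; rewrite -ctmx_t.
  rewrite {1}HY {2}cY2 mulmxA -[ctmx Y *m L *m ctmx L]mulmxA LL mulmx1 //.
move: Ynorm => /orthomx_spectralP.
set U := spectralmx Y; set sp := spectral_diag Y => HYs.
have Uu : U \is unitarymx by apply: spectral_unitarymx.
have Uinv : invmx U = ctmx U by rewrite invmx_unitary // ctmx_t.
exists (invmx P *m ctmx U); split.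
  by rewrite unitmx_mul unitmx_inv Pu ctmx_unit spectral_unit.
rewrite ctmxM ctmxK -Uinv.
have -> : U *m ctmx (invmx P) *m B *m (invmx P *m invmx U) = U *m Y *m invmx U.
  by rewrite /Y !mulmxA.
rewrite HYs !mulmxA mulmxV ?spectral_unit // mul1mx mulmxK ?spectral_unit //.
Qed.

End L1.



Section Fwd.
Variable C : numClosedFieldType.

Lemma congr_ker n (X Y Q : 'M[C]_n) (x : 'cV[C]_n) : Q \in unitmx ->
  X = ctmx Q *m Y *m Q -> (X *m x = 0 <-> Y *m (Q *m x) = 0).
Proof.
move=> Qu ->; split => h.
  have -> : Y *m (Q *m x) = ctmx (invmx Q) *m (ctmx Q *m Y *m Q *m x).
    by rewrite !mulmxA -ctmxM mulmxV // ctmx1 mul1mx.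
  by rewrite h mulmx0.
by rewrite -!mulmxA h !mulmx0.
Qed.

Lemma diag_ker n (d : 'rV[C]_n) (y : 'cV[C]_n) :
  diag_mx d *m y = 0 <-> ctmx (diag_mx d) *m y = 0.
Proof.
rewrite ctmx_diag !mul_diag_mx; split => /matrixP h; apply/matrixP => i j;
  move: (h i j); rewrite !mxE => /eqP; rewrite mulf_eq0 => /orP[|] /eqP e;
  by rewrite ?e ?mulr0 // ?conjC_eq0 -?conjC_eq0 ?e ?conjC0 ?mul0r //; move: e => /eqP; rewrite conjC_eq0 => /eqP ->; rewrite mul0r.
Qed.

Lemma fwd_ker n (A S : 'M[C]_n) : S \in unitmx -> is_diag_mx (ctmx S *m A *m S) ->
  forall x : 'cV[C]_n, A *m x = 0 <-> ctmx A *m x = 0.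
Proof.
move=> Su /diag_mxP [d Hd] x.
have HA : A = ctmx (invmx S) *m diag_mx d *m invmx S.
  by rewrite -Hd !mulmxA -ctmxM mulmxV // ctmx1 mul1mx mulmxK.
have HAc : ctmx A = ctmx (invmx S) *m ctmx (diag_mx d) *m invmx S.
  by rewrite {1}HA !ctmxM ctmxK mulmxA.
rewrite (congr_ker _ _ HA) ?unitmx_inv //.
by rewrite (congr_ker _ _ HAc) ?unitmx_inv // diag_ker.
Qed.

End Fwd.



Section Fwd2.
Variable C : numClosedFieldType.

Lemma fwd_reg k q (A S R' : 'M[C]_(k + q)) (B : 'M[C]_k) (N : 'M[C]_q) :
  S \in unitmx -> is_diag_mx (ctmx S *m A *m S) -> B \in unitmx ->
  R' \in unitmx -> ctmx R' *m A *m R' = block_mx B 0 0 N ->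
  diagonalizable (cosquare B) /\
  (forall l, eigenvalue (cosquare B) l -> `|l| = 1).
Proof.
move=> Su /diag_mxP [d Hd] Bu R'u HR.
set D := diag_mx d in Hd.
set T := invmx S *m R'.
have Tu : T \in unitmx by rewrite unitmx_mul unitmx_inv Su.
have HT : ctmx T *m D *m T = block_mx B 0 0 N.
  rewrite -HR -Hd /T !ctmxM !mulmxA -[ctmx R' *m ctmx (invmx S) *m ctmx S]mulmxA.
  by rewrite -ctmxM mulmxV // ctmx1 mulmx1 mulmxK.
set G1 := lsubmx T; set G2 := rsubmx T.
have TE : T = row_mx G1 G2 by rewrite hsubmxK.
set X1 := ctmx G1; set X2 := ctmx G2.
have cTE : ctmx T = col_mx X1 X2 by rewrite TE ctmx_row.
have HT2 : col_mx X1 X2 *m D *m row_mx G1 G2 = block_mx B 0 0 N.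
  by rewrite -cTE hsubmxK.
move: HT2; rewrite mul_col_mx mul_col_row.
move=> /eq_block_mx [HB H12 H21 _].
set Ti := invmx T.
set Q := usubmx Ti; set Q2 := dsubmx Ti.
have TiE : Ti = col_mx Q Q2 by rewrite vsubmxK.
have H1 : G1 *m Q + G2 *m Q2 = 1%:M.
  by rewrite -mul_row_col -TE -TiE mulmxV.
have H2 : Q *m G1 = 1%:M.
  have := mulVmx Tu; rewrite -/Ti TiE TE mul_col_row.
  by rewrite (scalar_mx_block k q) => /eq_block_mx [].
set Z := ctmx Q; set Z2 := ctmx Q2.
have H1' : Z *m X1 = 1%:M - Z2 *m X2.
  by rewrite /Z /Z2 /X1 /X2 -!ctmxM -ctmx1 -H1 ctmxD addrK.
set Dc := ctmx D.
have H21' : X2 *m Dc *m G1 = 0.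
  by rewrite -[G1]ctmxK -/X1 /Dc /X2 -!ctmxM mulmxA H12 ctmx0.
have ZB : Z *m B = D *m G1.
  by rewrite -HB !mulmxA H1' !mulmxBl mul1mx -!mulmxA [X2 *m _]mulmxA H21 mulmx0 subr0.
have cB : ctmx B = X1 *m Dc *m G1.
  by rewrite -HB !ctmxM ctmxK mulmxA.
have ZBc : Z *m ctmx B = Dc *m G1.
  by rewrite cB !mulmxA H1' !mulmxBl mul1mx -!mulmxA [X2 *m _]mulmxA H21' mulmx0 subr0.
set Cq := cosquare B.
have Key : Dc *m G1 *m Cq = D *m G1.
  rewrite -ZBc /Cq /cosquare !mulmxA -[Z *m ctmx B *m ctmx (invmx B)]mulmxA -ctmxM.
  by rewrite mulVmx // ctmx1 mulmx1 ZB.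
have H12' : X1 *m Dc *m G2 = 0.
  by rewrite -[G2]ctmxK -/X2 /Dc /X1 -!ctmxM mulmxA H21 ctmx0.
have Bi w : w *m B = 0 -> w = 0.
  by move=> h; rewrite -[w](mulmxK Bu) h mul0mx.
split; last first.
  move=> l /eigenvalueP [x Hx xn0].
  set w := x *m ctmx (invmx B).
  have wcB : w *m ctmx B = x by rewrite /w -mulmxA -ctmxM mulmxV // ctmx1 mulmx1.
  have wB : w *m B = l *: (w *m ctmx B) by rewrite wcB -Hx /Cq /cosquare /w mulmxA.
  set u := w *m X1.
  have uG : (u *m D - l *: (u *m Dc)) *m T = 0.
    rewrite TE mul_mx_row !mulmxBl -!scalemxAl /u -!mulmxA.
    rewrite ![X1 *m (_ *m _)]mulmxA HB H12 H12' -cB !mulmx0 scaler0 !mulmxA -/w wB.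
    by rewrite !subrr row_mx0.
  have E0 : u *m D - l *: (u *m Dc) = 0 by rewrite -[LHS](mulmxK Tu) uG mul0mx.
  case: (pickP (fun i => u 0 i * d 0 i != 0)) => [i /= Hi | Hn].
    move/rowP: E0 => /(_ i); rewrite /Dc ctmx_diag /D !mul_mx_diag !mxE.
    move=> /eqP; rewrite subr_eq0 => /eqP /(congr1 Num.norm).
    rewrite !normrM norm_conjC mulrCA => h.
    have nz : `|u 0 i| * `|d 0 i| != 0 by rewrite -normrM normr_eq0.
    move: nz; rewrite /u mxE => nz.
    by apply: (mulIf nz); rewrite mul1r [RHS]h mulrCA.
  have uD : u *m D = 0.
    apply/rowP => i; rewrite /D mul_mx_diag !mxE.
    by move: (Hn i) => /= /negbFE /eqP; rewrite /u mxE.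
  have w0 : w = 0 by apply: Bi; rewrite -HB /u !mulmxA in uD *; rewrite uD mul0mx.
  by move: xn0; rewrite -wcB w0 mul0mx eqxx.
apply/diagonalizablePeigen.
exists (undup [seq d 0 i / (d 0 i)^* | i <- enum 'I_(k+q)]); first exact: undup_uniq.
apply/eqmxP/andP; split; first exact: submx1.
apply/row_subP => j; move: (row j 1%:M) => x.
rewrite -[x]mulmx1 -H2 mulmxA mulmx_sum_row.
apply/summx_sub => i _.
have [d0|dn0] := eqVneq (d 0 i) 0.
  have rZ : row i Z = 0.
    apply: Bi; rewrite -row_mul ZB /D row_diag_mul d0 scale0r //.
  have -> : (x *m Q) 0 i = 0.
    rewrite !mxE; apply: big1 => j' _.
    move/rowP: rZ => /(_ j'); rewrite !mxE => /eqP.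
    by rewrite conjC_eq0 => /eqP ->; rewrite mulr0.
  by rewrite scale0r sub0mx.
apply: scalemx_sub.
have cn0 : (d 0 i)^* != 0 by rewrite conjC_eq0.
apply: (submx_trans (_ : row i G1 <= eigenspace Cq (d 0 i / (d 0 i)^*))%MS).
  apply/eigenspaceP.
  have := congr1 (row i) Key; rewrite !row_mul /Dc ctmx_diag /D !row_diag_mx -!scalemxAl -!rowE mxE.
  move=> h.
  rewrite -[row i G1 *m Cq]scale1r -(mulVf cn0) -scalerA h scalerA mulrC //.
rewrite (big_rem (d 0 i / (d 0 i)^*)) /= ?addsmxSl // mem_undup.
by apply: map_f; rewrite mem_enum.
Qed.
End Fwd2.



Section Bwd.
Variable C : numClosedFieldType.

Lemma is_diag0 m n : is_diag_mx (0 : 'M[C]_(m, n)).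
Proof. by apply/is_diag_mxP => i j _; rewrite mxE. Qed.

Lemma bwd_core n (A : 'M[C]_n) k q (V : 'M[C]_(n, k)) (W : 'M[C]_(n, q))
  (e : (k + q = n)%N) :
  A *m W = 0 -> ctmx W *m A = 0 -> \rank (row_mx V W) = n -> \rank A = k ->
  exists R (B : 'M[C]_k), [/\ R \in unitmx, B \in unitmx,
    ctmx R *m A *m R = castmx (e, e) (block_mx B 0 0 (0 : 'M[C]_q)) &
    (forall V', V' \in unitmx -> is_diag_mx (ctmx V' *m B *m V') ->
       exists S, S \in unitmx /\ is_diag_mx (ctmx S *m A *m S))].
Proof.
subst n => AW WA rR rA.
set R := row_mx V W.
have Ru : R \in unitmx by rewrite -row_full_unit /row_full rR.
set B := ctmx V *m A *m V.
have HR : ctmx R *m A *m R = block_mx B 0 0 0.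
  by rewrite /R ctmx_row mul_col_mx mul_col_row WA -[ctmx V *m A *m W]mulmxA AW mulmx0 !mul0mx.
have Bu : B \in unitmx.
  rewrite -row_full_unit /row_full.
  have := rank_diag_block_mx B (0 : 'M[C]_(q, q)).
  rewrite -HR mxrank0 addn0 mxrankMfree ?row_free_unit //.
  by rewrite (eqmxMfull _ _) ?row_full_unit ?ctmx_unit // rA; move=> <-.
exists R, B; rewrite castmx_id; split => // V' V'u HV'.
exists (R *m block_mx V' 0 0 1%:M); split.
  rewrite unitmx_mul Ru unitmxE det_ublock det1 mulr1 -unitmxE V'u //.
rewrite ctmxM !mulmxA -[ctmx _ *m ctmx R *m A]mulmxA -[ctmx _ *m (ctmx R *m A) *m R]mulmxA.
rewrite -mulmxA HR ctmx_block ctmx0 ctmx1 !mulmx_block.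
rewrite !mulmx0 !(ctmx0 C) !mul0mx ?mulmx0 !addr0 mulmxA.
rewrite is_diag_block_mx //; apply/and4P; split => //.
- by apply/eqP/matrixP => i j; rewrite !mxE ?big1 // => l _; rewrite !mxE ?mulr0 ?mul0r.
- by apply/eqP/matrixP => i j; rewrite !mxE big1 ?addr0 // => l _; rewrite !mxE ?mulr0 ?mul0r.
- by apply/is_diag_mxP => i j _; rewrite !mxE big1 ?addr0 // => l _; rewrite !mxE ?mulr0 ?mul0r.
Qed.

End Bwd.



Section Main.
Variable C : numClosedFieldType.

Lemma jns_nseq q : jordan_nil_sum C (nseq q 1%N) = 0.
Proof.
elim: q => [//|q IH] /=; rewrite IH.
have -> : nil_jordan C 1 = 0 by apply/matrixP => i j; rewrite !ord1 !mxE.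
exact: block_mx0.
Qed.

Lemma cast_irr n k q q' (h : q' = q) (e : (k + q = n)%N) (e' : (k + q' = n)%N)
  (B : 'M[C]_k) :
  castmx (e', e') (block_mx B 0 0 (0 : 'M[C]_q')) =
  castmx (e, e) (block_mx B 0 0 (0 : 'M[C]_q)).
Proof. subst q'; by have -> : e' = e by apply: eq_irrelevance. Qed.

Lemma bwd_construct n (A : 'M[C]_n) :
  (forall x : 'cV[C]_n, A *m x = 0 <-> ctmx A *m x = 0) ->
  exists k (B : 'M[C]_k), regular_part A B /\
    (forall V', V' \in unitmx -> is_diag_mx (ctmx V' *m B *m V') ->
       exists S, S \in unitmx /\ is_diag_mx (ctmx S *m A *m S)).
Proof.
move=> Hker.
set K := kermx A^T.
set Kb := row_base K; set Vb := row_base K^C%MS.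
set W := Kb^T; set V := Vb^T.
have AW : A *m W = 0.
  have h : Kb *m A^T = 0 by apply/sub_kermxP; rewrite eq_row_base submx_refl.
  by rewrite /W -[A]trmxK -trmx_mul h trmx0.
have cAW : ctmx A *m W = 0.
  apply/matrixP => i j.
  have h : ctmx A *m (W *m delta_mx j (0 : 'I_1)) = 0.
    by apply: (proj1 (Hker _)); rewrite mulmxA AW mul0mx.
  by move/matrixP: h => /(_ i 0); rewrite mulmxA -colE !mxE.
have WA : ctmx W *m A = 0 by rewrite -[A]ctmxK -ctmxM cAW ctmx0.
have rK : \rank K = (n - \rank A)%N by rewrite mxrank_ker mxrank_tr.
have rKc : \rank K^C%MS = \rank A.
  rewrite mxrank_compl rK; have := rank_leq_col A; lia.
have e : (\rank K^C%MS + \rank K = n)%N.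
  rewrite rKc rK; have := rank_leq_col A; lia.
have rR : \rank (row_mx V W) = n.
  rewrite /V /W -tr_col_mx mxrank_tr -addsmxE.
  apply/eqP; rewrite -/(row_full _) -sub1mx.
  apply: (submx_trans (_ : 1%:M <= K + K^C)%MS); first by rewrite sub1mx addsmx_compl_full.
  by rewrite addsmxC; apply: addsmxS; rewrite /Vb /Kb eq_row_base.
have [R [B [Ru Bu HR Hfin]]] := bwd_core e AW WA rR (esym rKc).
exists (\rank K^C%MS), B; split => //; split => //.
have e' : (\rank K^C%MS + sumn (nseq (\rank K) 1%N) = n)%N.
  by rewrite sumn_nseq mul1n.
exists (nseq (\rank K) 1%N), e', R; split => //.
rewrite jns_nseq HR; apply/esym/cast_irr.
by rewrite sumn_nseq mul1n.
Qed.

End Main.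


Theorem mainTheorem5 (R : realType) (n : nat) (A : 'M[R[i]]_n) :
  (exists S : 'M[R[i]]_n, S \in unitmx /\ is_diag_mx (ctmx S *m A *m S)) <->
  ((forall x : 'cV[R[i]]_n, A *m x = 0 <-> ctmx A *m x = 0) /\
   (forall (k : nat) (B : 'M[R[i]]_k), regular_part A B ->
      diagonalizable (cosquare B) /\
      (forall l : R[i], eigenvalue (cosquare B) l -> `|l| = 1))).
Proof.
split.
- move=> [S [Su HS]]; split; first exact: fwd_ker HS.
  move=> k B [Bu [s [e [R' [R'u HR]]]]].
  subst n; rewrite castmx_id in HR; exact: fwd_reg Su HS Bu R'u HR.
- move=> [Hker Hreg].
  have [k [B [HB Hfin]]] := bwd_construct Hker.
  have [Hd Hu] := Hreg k B HB.
  have [V' [V'u HV']] := L1 (proj1 HB) Hd Hu.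
  exact: Hfin V'u HV'.
Qed.
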